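(* There exist absolute constants $c>0$ and $n_0$ such that for every $n\ge n_0$ and every $p$ with $\frac{100}{n}\le p\le 1-\frac{100}{n}$, if $G\sim G(n,p)$ then with probability at least $1-e^{-cn}$, $G$ contains at least $n/100$ pairwise vertex-disjoint induced copies of $P_3$.
   Context: $G(n,p)$ is the binomial random graph on $n$ labelled vertices. $P_3$ denotes the path with three edges (four vertices). *)

(* Defs.v *)
From HB Require Import structures.
From mathcomp Require Import all_boot all_order all_algebra.
From mathcomp Require Import reals Rstruct.
From mathcomp Require Import sequences.
From mathcomp.analysis Require Import exp.
Set Implicit Arguments. Unset Strict Implicit. Unset Printing Implicit Defensive.
Import Order.TTheory GRing.Theory Num.Theory.
Local Open Scope ring_scope.

Definition pairs (n : nat) : {set {set 'I_n}} := [set e : {set 'I_n} | #|e| == 2%N].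

Definition is_graph (n : nat) (G : {set {set 'I_n}}) : bool := G \subset pairs n.

Definition adj (n : nat) (G : {set {set 'I_n}}) (u v : 'I_n) : bool :=
  (u != v) && ([set u; v] \in G).

Definition gnp_prob (R : pzRingType) (n : nat) (p : R) (A : pred {set {set 'I_n}}) : R :=
  \sum_(G : {set {set 'I_n}} | is_graph G && A G)
     p ^+ #|G| * (1 - p) ^+ (#|pairs n| - #|G|).

Definition quad (n : nat) := ('I_n * 'I_n * 'I_n * 'I_n)%type.

Definition qverts (n : nat) (x : quad n) : {set 'I_n} :=
  let: (a, b, c, d) := x in [set a; b; c; d].

Definition induced_P3 (n : nat) (G : {set {set 'I_n}}) (x : quad n) : bool :=
  let: (a, b, c, d) := x in
  [&& uniq [:: a; b; c; d], adj G a b, adj G b c, adj G c d,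
      ~~ adj G a c, ~~ adj G b d & ~~ adj G a d].

Definition has_disjoint_P3s (n : nat) (G : {set {set 'I_n}}) (k : nat) : bool :=
  [exists S : {set quad n},
    [&& (k <= #|S|)%N,
        [forall x in S, induced_P3 G x] &
        [forall x in S, forall y in S, (x != y) ==> [disjoint qverts x & qverts y]]]].

(* Main.v *)
Require Import Defs.
From HB Require Import structures.
From mathcomp Require Import all_boot all_order all_algebra.
From mathcomp Require Import reals Rstruct.
From mathcomp Require Import sequences.
From mathcomp.analysis Require Import exp.
From mathcomp Require Import zify lra.
Set Implicit Arguments. Unset Strict Implicit. Unset Printing Implicit Defensive.
Import Order.TTheory GRing.Theory Num.Theory.

Section Cograph.
Variable T : finType.

Definition p4 (r : rel T) (a b c d : T) : bool :=
  [&& uniq [:: a; b; c; d], r a b, r b c, r c d,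
      ~~ r a c, ~~ r b d & ~~ r a d].

Definition p4free (r : rel T) (X : {set T}) :=
  forall a b c d, a \in X -> b \in X -> c \in X -> d \in X -> ~~ p4 r a b c d.

Definition splitb (r : rel T) (X : {set T}) :=
  exists A B (t : bool), [/\ A :|: B = X, [disjoint A & B], A != set0, B != set0 &
     forall a b, a \in A -> b \in B -> r a b = t].

Definition rc (r : rel T) : rel T := fun u v => (u != v) && ~~ r u v.

Lemma rc_p4free r X : symmetric r -> p4free r X -> p4free (rc r) X.
Proof.
move=> sr H a b c d aX bX cX dX; apply/negP; rewrite /p4 /rc /=.
case/and5P => U /andP[_ rab] /andP[_ rbc] /andP[_ rcd] /and3P[nac nbd nad].
move: U; rewrite /= !inE !negb_or => /and4P[/and3P[ab ac ad] /andP[bc bd] cd _].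
move: nac nbd nad; rewrite ac bd ad /= !negbK => rac rbd rad.
move: (H b d a c bX dX aX cX); rewrite /p4 rbd (sr d a) rad rac (sr b a) (sr d c).
rewrite rab rcd rbc /= !inE ?(eq_sym b a) ?(eq_sym d a) ?(eq_sym c b) ?(eq_sym d b) ?(eq_sym d c) ?(eq_sym c a).
by rewrite (negPf ab) (negPf ac) (negPf ad) (negPf bc) (negPf bd) (negPf cd).
Qed.

Lemma step_core r (sr : symmetric r) (ir : irreflexive r) (P Q : {set T}) v x y :
  [disjoint P & Q] -> (forall a b, a \in P -> b \in Q -> r a b = false) ->
  v \notin P :|: Q -> p4free r (v |: (P :|: Q)) -> x \in P -> y \in P -> r x y ->
  r v x -> ~~ r v y -> Q != set0 -> splitb r (v |: (P :|: Q)).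
Proof.
move=> dPQ cr vn H xP yP rxy rvx rvy Qn.
have vP : v \notin P by apply: contra vn; rewrite inE => ->.
have vQ : v \notin Q by apply: contra vn; rewrite inE orbC => ->.
case: (boolP [exists z in Q, r v z]) => [/exists_inP[z zQ rvz] | /exists_inPn noz].
  exfalso.
  have yX : y \in v |: (P :|: Q) by rewrite !inE yP orbT.
  have xX : x \in v |: (P :|: Q) by rewrite !inE xP orbT.
  have vX : v \in v |: (P :|: Q) by rewrite !inE eqxx.
  have zX : z \in v |: (P :|: Q) by rewrite !inE zQ !orbT.
  move/negP: (H y x v z yX xX vX zX); apply.
  have neq : forall a b, a \in P -> b \in Q -> a != b.
    by move=> a b aP bQ; apply/eqP => ab; move: (disjointFr dPQ aP); rewrite ab bQ.
  rewrite /p4 /= !inE.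
  have -> : (y == x) = false by apply/negbTE/eqP => yx; move: rxy; rewrite yx ir.
  have -> : (y == v) = false by apply/negbTE/eqP => yv; move: vP; rewrite -yv yP.
  have -> : (x == v) = false by apply/negbTE/eqP => xv; move: vP; rewrite -xv xP.
  have -> : (v == z) = false by apply/negbTE/eqP => vz; move: vQ; rewrite vz zQ.
  rewrite (negPf (neq y z yP zQ)) (negPf (neq x z xP zQ)) /=.
  by rewrite (sr y x) rxy (sr x v) rvx rvz (sr y v) rvy (cr x z xP zQ) (cr y z yP zQ).
exists Q, (v |: P), false; split.
- by apply/setP => w; rewrite !inE; case: (w == v); case: (w \in P); case: (w \in Q).
- rewrite -setI_eq0; apply/eqP/setP => w; rewrite !inE.
  case: (boolP (w \in Q)) => wQ //=.
  have -> : (w == v) = false by apply/negbTE/eqP => wv; move: vQ; rewrite -wv wQ.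
  by rewrite (disjointFl dPQ wQ).
- exact: Qn.
- by apply/set0Pn; exists v; rewrite !inE eqxx.
- move=> a b aQ; rewrite !inE => /orP[/eqP -> | bP].
    by rewrite sr; apply/negbTE; apply: noz.
  by rewrite sr; apply: cr.
Qed.

Lemma step r (sr : symmetric r) (ir : irreflexive r) (A B : {set T}) v :
  [disjoint A & B] -> A != set0 -> B != set0 ->
  (forall a b, a \in A -> b \in B -> r a b = false) ->
  v \notin A :|: B -> p4free r (v |: (A :|: B)) -> splitb r (v |: (A :|: B)).
Proof.
move=> dAB An Bn cr vn H.
set X' := A :|: B.
set N := [set x in X' | r v x]; set M := X' :\: N.
have vX' : v \notin X' by [].
case: (boolP (M == set0)) => [/eqP M0 | Mn].
  exists [set v], X', true; split => //.
  - rewrite -setI_eq0; apply/eqP/setP => w; rewrite !inE.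
    by case: (boolP (w == v)) => // /eqP ->; move: vX'; rewrite !inE; case: (v \in A); case: (v \in B).
  - by apply/set0Pn; exists v; rewrite inE.
  - by move: An; apply: contra => /eqP X0; apply/eqP/setP => w; move/setP: X0 => /(_ w); rewrite !inE; case: (w \in A).
  - move=> a b; rewrite inE => /eqP -> bX.
    apply/negbNE; apply/negP => nr.
    have bM : b \in M by rewrite /M /N in_setD in_set bX nr.
    by move: bM; rewrite M0 inE.
case: (boolP [forall x in N, forall y in M, ~~ r x y]) => [noE | ].
  exists M, (v |: N), false; split => //.
  - apply/setP => w; rewrite /M /N !inE.
    case: (boolP (w == v)) => [/eqP -> | _]; last by case: (w \in A); case: (w \in B) => //=; case: (r v w).
    by move: vX'; rewrite !inE; case: (v \in A); case: (v \in B).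
  - rewrite -setI_eq0; apply/eqP/setP => w; rewrite !inE.
    case: (boolP (w == v)) => [/eqP -> | _ /=].
      by move: vX'; rewrite !inE; case: (v \in A); case: (v \in B).
    by case: (r v w); case: (w \in A); case: (w \in B).
  - by apply/set0Pn; exists v; rewrite !inE eqxx.
  - move=> a b aM; rewrite in_setU1 => /orP[/eqP -> | bN].
      by move: aM; rewrite !inE sr; case: (r a v); case: (a \in A); case: (a \in B).
    by rewrite sr; apply/negbTE; move/forall_inP: noE => /(_ b bN) /forall_inP; apply.
move=> /forall_inPn [x xN /forall_inPn [y yM /negbNE rxy]].
move: xN yM; rewrite !inE => /andP[xX rvx] /andP[ryN yX].
have nrvy : ~~ r v y by move: ryN; rewrite yX.
case/orP: xX => xA.
  have yA : y \in A.
    case/orP: yX => // yB; by move: rxy; rewrite (cr x y xA yB).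
  by apply: (step_core sr ir dAB cr vn H xA yA rxy rvx nrvy Bn).
have yB : y \in B.
  case/orP: yX => // yA; by move: rxy; rewrite sr (cr y x yA xA).
have e : v |: (A :|: B) = v |: (B :|: A) by rewrite (setUC A B).
rewrite /X' e; rewrite /X' e in H.
apply: (step_core sr ir _ _ _ H xA yB rxy rvx nrvy An).
- by rewrite disjoint_sym.
- by move=> a b aB bA; rewrite sr; apply: cr.
- by rewrite setUC.
Qed.

Lemma p4free_sub r (X Y : {set T}) : Y \subset X -> p4free r X -> p4free r Y.
Proof. by move=> /subsetP s H a b c d aY bY cY dY; apply: H; apply: s. Qed.

Lemma rc_sym r : symmetric (rc r) -> True. Proof. by []. Qed.

Lemma split_rc r X : splitb (rc r) X -> splitb r X.
Proof.
case=> A [B [t [U D An Bn h]]]; exists A, B, (~~ t); split => // a b aA bB.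
have ab : a != b by apply/eqP => e; move: (disjointFr D aA); rewrite e bB.
by move: (h a b aA bB); rewrite /rc ab /= => <-; rewrite negbK.
Qed.

Lemma seinsche r (sr : symmetric r) (ir : irreflexive r) (X : {set T}) :
  1 < #|X| -> p4free r X -> splitb r X.
Proof.
have [k] := ubnP #|X|; elim: k X => // k IH X ltX X2 H.
have /set0Pn [v vX] : X != set0 by rewrite -card_gt0 ltnW.
set X' := X :\ v.
have cX : #|X| = #|X'|.+1 by rewrite (cardsD1 v X) vX.
have eX : X = v |: X' by rewrite setD1K.
have vX' : v \notin X' by rewrite !inE eqxx.
case: (ltnP 1 #|X'|) => [X'2 | X'1].
  have ltX' : #|X'| < k by rewrite -ltnS -cX.
  have H' : p4free r X' by apply: (p4free_sub (subsetDl X [set v]) H).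
  have [A [B [t [U D An Bn h]]]] := IH X' ltX' X'2 H'.
  rewrite eX -U in H *; rewrite -U in vX'.
  case: t h => h.
    apply: split_rc.
    have src : symmetric (rc r) by move=> x y; rewrite /rc eq_sym sr.
    have irc : irreflexive (rc r) by move=> x; rewrite /rc eqxx.
    apply: (step src irc D An Bn) => //.
      move=> a b aA bB; rewrite /rc (h a b aA bB) /=; by rewrite andbF.
    exact: rc_p4free.
  exact: (step sr ir D An Bn h vX' H).
have c1 : #|X'| == 1 by rewrite eqn_leq X'1 -ltnS -cX.
have /cards1P [u eu] := c1.
exists [set v], X', (r v u); split => //.
- rewrite -setI_eq0; apply/eqP/setP => w; rewrite !inE.
  by case: (boolP (w == v)) => // /eqP ->; move: vX'; rewrite !inE eqxx.
- by apply/set0Pn; exists v; rewrite inE.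
- by apply/set0Pn; exists u; rewrite eu inE.
- by move=> a b; rewrite inE => /eqP ->; rewrite eu inE => /eqP ->.
Qed.

Lemma card_disjU (A B : {set T}) : [disjoint A & B] -> #|A :|: B| = #|A| + #|B|.
Proof. by move=> D; rewrite cardsU (_ : A :&: B = set0) ?cards0 ?subn0 //; apply/eqP; rewrite setI_eq0. Qed.

Lemma disj_sub (A B C : {set T}) : A \subset B -> [disjoint B & C] -> [disjoint A & C].
Proof. by move=> s D; apply: disjointWl s D. Qed.

Lemma disjsU (A B C : {set T}) : [disjoint A :|: B & C] = [disjoint A & C] && [disjoint B & C].
Proof. by rewrite -!setI_eq0 setIUl setU_eq0. Qed.

Lemma disjsU' (A B C : {set T}) : [disjoint C & A :|: B] = [disjoint C & A] && [disjoint C & B].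
Proof. by rewrite disjoint_sym disjsU ![[disjoint C & _]]disjoint_sym. Qed.

Lemma hom_pair r (sr : symmetric r) (ir : irreflexive r) m (X : {set T}) (R : bool -> {set T}) :
  p4free r X -> (forall t, [disjoint X & R t]) ->
  (forall t x y, x \in X -> y \in R t -> r x y = t) ->
  (forall t, 4 * #|R t| < m) -> m <= #|X| + #|R true| + #|R false| -> 1 < m ->
  exists (A B : {set T}) (t : bool), [/\ [disjoint A & B], m <= 4 * #|A|, m <= 4 * #|B| &
                    forall a b, a \in A -> b \in B -> r a b = t].
Proof.
have [k] := ubnP #|X|; elim: k X R => // k IH X R ltX H DR hom sm sX m2.
have X2 : 1 < #|X| by move: (sm true) (sm false); lia.
have [A0 [B0 [t [U0 D0 An0 Bn0 h0]]]] := seinsche sr ir X2 H.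
have [A [B [U D Bn h BA]]] : exists A B : {set T}, [/\ A :|: B = X, [disjoint A & B], B != set0,
     (forall a b, a \in A -> b \in B -> r a b = t) & #|B| <= #|A|].
  case: (leqP #|B0| #|A0|) => c; first by exists A0, B0.
  exists B0, A0; split => //; [by rewrite setUC | by rewrite disjoint_sym | | exact: ltnW].
  by move=> a b aB bA; rewrite sr; apply: h0.
have cX : #|X| = #|A| + #|B| by rewrite -U card_disjU.
have AX : A \subset X by rewrite -U subsetUl.
have BX : B \subset X by rewrite -U subsetUr.
have DB : [disjoint B & R t] by apply: disj_sub BX (DR t).
have cRB : #|R t :|: B| = #|R t| + #|B| by rewrite card_disjU // disjoint_sym.
case: (leqP m (4 * #|R t :|: B|)) => big.
  exists (R t :|: B), A, t; split => //.
  - rewrite disjsU disjoint_sym (disj_sub AX (DR t)) /=.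
    by rewrite disjoint_sym.
  - move: (sm true) (sm false) cRB cX big sX BA; lia.
  - move=> a b; rewrite inE => /orP[aR | aB] bA.
      by rewrite sr; apply: hom aR; apply: (subsetP AX).
    by rewrite sr; apply: h.
pose R' := fun s => if s == t then R t :|: B else R s.
have ltA : #|A| < k.
  have : 0 < #|B| by rewrite card_gt0.
  move: ltX; rewrite cX; lia.
apply: (IH A R' ltA).
- exact: p4free_sub AX H.
- move=> s; rewrite /R'; case: ifP => [/eqP e|ns]; [subst s | by apply: disj_sub AX (DR s)].
  by rewrite disjsU' (disj_sub AX (DR t)).
- move=> s x y xA; rewrite /R'; case: ifP => [/eqP e|ns]; [subst s | by apply: hom; apply: (subsetP AX)].
  rewrite inE => /orP[yR | yB]; last by apply: h.
  by apply: hom yR; apply: (subsetP AX).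
- by move=> s; rewrite /R'; case: ifP.
- rewrite /R'; case: t cRB {h h0 R' big DB} => /= cRB; move: cRB cX sX; lia.
- exact: m2.
Qed.
End Cograph.

Section Det.
Variable n : nat.
Variable G : {set {set 'I_n}}.

Definition validS (S : {set quad n}) : bool :=
  [forall x in S, induced_P3 G x] &&
  [forall x in S, forall y in S, (x != y) ==> [disjoint qverts x & qverts y]].

Lemma adj_sym : symmetric (adj G).
Proof. by move=> u v; rewrite /adj eq_sym setUC. Qed.

Lemma adj_irr : irreflexive (adj G).
Proof. by move=> u; rewrite /adj eqxx. Qed.

Lemma card_qverts (x : quad n) : #|qverts x| <= 4.
Proof.
case: x => [[[a b] c] d] /=.
have sub : [set a; b; c; d] \subset [set x in [:: a; b; c; d]].
  by apply/subsetP => x; rewrite !inE -!orbA.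
apply: leq_trans (subset_leq_card sub) _.
by rewrite cardsE (card_size [:: a; b; c; d]).
Qed.

Lemma card_bigcupq (S : {set quad n}) : #|\bigcup_(x in S) qverts x| <= 4 * #|S|.
Proof.
have : #|\bigcup_(x in S) qverts x| <= \sum_(x in S) #|qverts x|.
  elim/big_rec2: _ => [|x U s _ IH]; first by rewrite cards0.
  by rewrite cardsU; apply: leq_trans (leq_subr _ _) _; rewrite leq_add2l.
move/leq_trans; apply.
rewrite mulnC -sum_nat_const; apply: leq_sum => x _; exact: card_qverts.
Qed.


Lemma disj_WU (A B U : {set 'I_n}) : A \subset ~: U -> B \subset U -> [disjoint A & B].
Proof.
move=> sA sB; rewrite -setI_eq0; apply/eqP/setP => w; rewrite !inE.
case: (boolP (w \in A)) => wA //=; apply/negP => wB.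
by move: (subsetP sA w wA) (subsetP sB w wB); rewrite inE => /negP.
Qed.

Lemma det : 2 < n ->
  ~~ [exists k : 'I_n.+1, (n <= 100 * k)%N && has_disjoint_P3s G k] ->
  exists (A B : {set 'I_n}) (t : bool), [/\ [disjoint A & B], 6 * n <= 25 * #|A|,
     6 * n <= 25 * #|B| & forall a b, a \in A -> b \in B -> adj G a b = t].
Proof.
move=> n2 ng.
have kn : (n %/ 100).+1 < n.+1 by rewrite ltnS ltn_Pdiv //; lia.
have Smax : forall S, validS S -> #|S| <= n %/ 100.
  move=> S vS; rewrite leqNgt; apply/negP => big; move/negP: ng; apply.
  apply/existsP; exists (Ordinal kn); apply/andP; split.
    by rewrite /=; move: (leq_divM n 100) (ltn_ceil n (isT : 0 < 100)); lia.
  apply/existsP; exists S; case/andP: vS => v1 v2; by rewrite v1 v2 big.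
have v0 : validS set0.
  by rewrite /validS; apply/andP; split; apply/forall_inP => x; rewrite inE.
case: (@arg_maxnP _ set0 validS (fun S => #|S|) v0) => S vS maxS.
set U := \bigcup_(x in S) qverts x.
set W := ~: U.
have cW : #|U| + #|W| = n by rewrite cardsC card_ord.
have cU : #|U| <= 4 * #|S| by apply: card_bigcupq.
have sS := Smax S vS.
have pf : p4free (adj G) W.
  move=> a b c d aW bW cW' dW; apply/negP => P.
  pose x : quad n := (a, b, c, d).
  have ix : induced_P3 G x by exact: P.
  have qW : qverts x \subset W.
    apply/subsetP => z zq; move: zq; rewrite /x /= !inE -!orbA => /or4P[] /eqP ->; by move: aW bW cW' dW; rewrite /W !inE.
  have xS : x \notin S.
    apply/negP => xS.
    have aU : a \in U by apply/bigcupP; exists x => //; rewrite /x /= !inE eqxx.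
    by move: aW; rewrite inE aU.
  have v' : validS (x |: S).
    case/andP: vS => /forall_inP v1 /forall_inP v2.
    apply/andP; split.
      by apply/forall_inP => y; case/setU1P => [-> // | yS]; apply: v1.
    apply/forall_inP => y yS'; apply/forall_inP => w wS'; apply/implyP => yz.
    case/setU1P: yS' => [ey|yS]; case/setU1P: wS' => [ez|wS].
    - by rewrite ey ez eqxx in yz.
    - by rewrite ey; apply: disj_WU qW (bigcup_sup w wS).
    - by rewrite ez disjoint_sym; apply: disj_WU qW (bigcup_sup y yS).
    - by move/forall_inP: (v2 y yS) => /(_ w wS) /implyP; apply.
  by move: (maxS _ v'); rewrite cardsU1 xS /=; lia.
have c1 : forall t : bool, [disjoint W & (fun _ => set0 : {set 'I_n}) t].
  by move=> t; rewrite -setI_eq0 setI0.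
have c2 : forall (t : bool) x y, x \in W -> y \in (fun _ => set0 : {set 'I_n}) t -> adj G x y = t.
  by move=> t x y _; rewrite inE.
have c3 : forall t : bool, 4 * #|(fun _ => set0 : {set 'I_n}) t| < #|W|.
  move=> t; rewrite cards0 muln0; move: (leq_divM n 100); lia.
have c4 : #|W| <= #|W| + #|(fun _ => set0 : {set 'I_n}) true| + #|(fun _ => set0 : {set 'I_n}) false|.
  by rewrite cards0 !addn0.
have c5 : 1 < #|W| by move: (leq_divM n 100); lia.
have [A [B [t [D hA hB h]]]] := hom_pair adj_sym adj_irr pf c1 c2 c3 c4 c5.
have nU : #|U| <= 4 * (n %/ 100) by move: cU sS; lia.
have nW : 96 * n <= 100 * #|W| by move: (leq_divM n 100) cW nU; lia.
have hA' : #|W| <= 4 * #|(A : {set 'I_n})| := hA.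
have hB' : #|W| <= 4 * #|(B : {set 'I_n})| := hB.
exists A, B, t; split => //.
- by move: nW hA'; clear; lia.
- by move: nW hB'; clear; lia.
Qed.
End Det.

Section Main.
Variable n : nat.

Definition Ecross (A B : {set 'I_n}) : {set {set 'I_n}} :=
  [set [set x.1; x.2] | x in setX A B].

Lemma Ecross_sub (A B : {set 'I_n}) : [disjoint A & B] -> Ecross A B \subset pairs n.
Proof.
move=> D; apply/subsetP => e /imsetP [[a b]]; rewrite inE /= => /andP[aA bB] ->.
rewrite inE cards2.
have ab : a != b by apply/eqP => e'; move: (disjointFr D aA); rewrite e' bB.
by rewrite ab.
Qed.

Lemma Ecross_card (A B : {set 'I_n}) : [disjoint A & B] -> #|Ecross A B| = (#|A| * #|B|)%N.
Proof.
move=> D; rewrite card_in_imset ?cardsX //.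
move=> [a b] [a' b']; rewrite !inE /= => /andP[aA bB] /andP[aA' bB'] e.
have Ha : a \in [set a'; b'] by rewrite -e !inE eqxx.
have Hb : b \in [set a'; b'] by rewrite -e !inE eqxx orbT.
move: Ha Hb; rewrite !inE => /orP[/eqP ea | /eqP ea]; last first.
  by move: (disjointFr D aA); rewrite ea bB'.
move=> /orP[/eqP eb | /eqP eb]; last by rewrite ea eb.
by move: (disjointFr D aA'); rewrite -eb bB.
Qed.

Definition Idx := ({set 'I_n} * {set 'I_n} * bool)%type.

Definition condI (i : Idx) : bool :=
  let: (A, B, t) := i in [&& [disjoint A & B], (6 * n <= 25 * #|A|)%N & (6 * n <= 25 * #|B|)%N].

Definition evI (i : Idx) (G : {set {set 'I_n}}) : bool :=
  let: (A, B, t) := i in [forall e, (e \in Ecross A B) ==> ((e \in G) == t)].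

Lemma bad_of (G : {set {set 'I_n}}) : (2 < n)%N ->
  ~~ [exists k : 'I_n.+1, (n <= 100 * k)%N && has_disjoint_P3s G k] ->
  [exists i, condI i && evI i G].
Proof.
move=> n2 ng; have [A [B [t [D hA hB h]]]] := det n2 ng.
apply/existsP; exists (A, B, t); rewrite /condI /evI D hA hB /=.
apply/forallP => e; apply/implyP => /imsetP [[a b]]; rewrite inE /= => /andP[aA bB] ->.
have := h a b aA bB; rewrite /adj.
have ab : a != b by apply/eqP => e'; move: (disjointFr D aA); rewrite e' bB.
by rewrite ab /= => ->.
Qed.

End Main.

Local Open Scope ring_scope.

Section Prob.
Variable R : comPzRingType.
Variable n : nat.
Variable p : R.

Definition wt (e : {set 'I_n}) (b : bool) : R :=
  if e \in pairs n then (if b then p else 1 - p) else (if b then 0 else 1).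

Lemma prod_bool (I : finType) (b : I -> bool) :
  \prod_i ((b i)%:R : R) = ([forall i, b i])%:R.
Proof.
case: (boolP [forall i, b i]) => [/forallP h | /forallPn [i bi]].
  by rewrite big1 // => i _; rewrite h.
by rewrite (bigD1 i) //= (negPf bi) mul0r.
Qed.

Lemma wtK (G : {set {set 'I_n}}) :
  (is_graph G)%:R * (p ^+ #|G| * (1 - p) ^+ (#|pairs n| - #|G|)) =
  \prod_e wt e (e \in G).
Proof.
rewrite (bigID (fun e => e \in pairs n)) /=.
under eq_bigr => e ep do rewrite /wt ep.
under [X in _ = _ * X]eq_bigr => e ep do rewrite /wt (negPf ep).
case: (boolP (is_graph G)) => gG.
  rewrite mul1r [X in _ = _ * X]big1 ?mulr1; last first.
    move=> e ep; case: ifP => // eG.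
    by move/subsetP: gG => /(_ e eG); rewrite (negPf ep).
  rewrite (bigID (fun e => e \in G)) /=.
  under eq_bigr => e /andP[_ ->] do [].
  under [X in _ = _ * X]eq_bigr => e /andP[_ /negPf ->] do [].
  rewrite (eq_bigl (mem G)); last first.
    move=> e /=; apply/andP/idP => [[] //| eG]; split => //.
    by move/subsetP: gG; apply.
  rewrite prodr_const.
  rewrite (eq_bigl (mem (pairs n :\: G))); last first.
    by move=> e /=; rewrite !inE andbC.
  by rewrite prodr_const cardsDS.
rewrite mul0r.
have [e eG ep] : exists2 e, e \in G & e \notin pairs n.
  by move/subsetPn: gG => [e eG ep]; exists e.
by rewrite [X in _ = _ * X](bigD1 e) //= eG mul0r mulr0.
Qed.

Lemma gnp_prod (al : {set 'I_n} -> pred bool) :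
  gnp_prob p (fun G => [forall e, al e (e \in G)]) =
  \prod_e ((al e true)%:R * wt e true + (al e false)%:R * wt e false).
Proof.
rewrite bigA_distr /gnp_prob big_mkcond /=.
apply: eq_bigr => G _.
have -> : \prod_e (if e \in G then (al e true)%:R * wt e true else (al e false)%:R * wt e false)
   = \prod_e ((al e (e \in G))%:R * wt e (e \in G)).
  by apply: eq_bigr => e _; case: (e \in G).
rewrite big_split /= prod_bool -wtK.
by case: (is_graph G); case: [forall e, al e (e \in G)]; rewrite /= ?mul1r ?mul0r.
Qed.


Lemma gnp_ext (A B : pred {set {set 'I_n}}) : (forall G, A G = B G) -> gnp_prob p A = gnp_prob p B.
Proof. by move=> h; rewrite /gnp_prob; apply: eq_bigl => G; rewrite h. Qed.

Lemma gnp_prod' (al : {set 'I_n} -> pred bool) (A : pred {set {set 'I_n}}) :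
  (forall G, A G = [forall e, al e (e \in G)]) ->
  gnp_prob p A = \prod_e ((al e true)%:R * wt e true + (al e false)%:R * wt e false).
Proof. by move=> h; rewrite (gnp_ext h) gnp_prod. Qed.

Lemma gnp_total : gnp_prob p (fun _ : {set {set 'I_n}} => true) = 1.
Proof.
rewrite (@gnp_prod' (fun _ _ => true)); last by move=> G; apply/esym/forallP.
rewrite big1 // => e _; rewrite /wt /=.
by case: (e \in pairs n); rewrite !mul1r; [rewrite addrC subrK | rewrite add0r].
Qed.

Lemma gnp_hom (E : {set {set 'I_n}}) (t : bool) : E \subset pairs n ->
  gnp_prob p (fun G => [forall e, (e \in E) ==> ((e \in G) == t)]) =
  (if t then p else 1 - p) ^+ #|E|.
Proof.
move=> sE.
rewrite (@gnp_prod' (fun e b => (e \in E) ==> (b == t))) //.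
rewrite (bigID (mem E)) /= [X in _ * X]big1 ?mulr1; last first.
  move=> e eE; rewrite (negPf eE) /wt /=.
  by case: (e \in pairs n); rewrite !mul1r; [rewrite addrC subrK | rewrite add0r].
rewrite -prodr_const; apply: eq_bigr => e eE.
rewrite eE /wt (subsetP sE e eE) /=.
by case: t; rewrite /= ?mul1r ?mul0r ?addr0 ?add0r.
Qed.

Lemma gnp_split (A : pred {set {set 'I_n}}) :
  gnp_prob p A + gnp_prob p (fun G => ~~ A G) = 1.
Proof.
rewrite -gnp_total /gnp_prob.
rewrite [X in _ = X](bigID (fun G => A G)) /=.
congr (_ + _); apply: eq_bigl => G; by case: (is_graph G); case: (A G).
Qed.

End Prob.

Section ProbNum.
Variable R : numDomainType.
Variable n : nat.
Variable p : R.
Hypothesis p0 : 0 <= p.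
Hypothesis p1 : p <= 1.

Lemma wt_ge0 (G : {set {set 'I_n}}) : 0 <= p ^+ #|G| * (1 - p) ^+ (#|pairs n| - #|G|).
Proof. by rewrite mulr_ge0 // exprn_ge0 // subr_ge0. Qed.

Lemma gnp_mono (A B : pred {set {set 'I_n}}) : (forall G, A G -> B G) ->
  gnp_prob p A <= gnp_prob p B.
Proof.
move=> h; rewrite /gnp_prob [X in X <= _]big_mkcond [X in _ <= X]big_mkcond /=.
apply: ler_sum => G _.
case: (is_graph G) => //=; case: (boolP (A G)) => AG; first by rewrite (h G AG).
by case: (B G) => //; apply: wt_ge0.
Qed.

Lemma gnp_union (I : finType) (P : I -> pred {set {set 'I_n}}) :
  gnp_prob p (fun G => [exists i, P i G]) <= \sum_i gnp_prob p (P i).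
Proof.
rewrite /gnp_prob big_mkcond /=.
under [X in _ <= X]eq_bigr => i _ do rewrite big_mkcond /=.
rewrite exchange_big /=; apply: ler_sum => G _.
case: (boolP (is_graph G)) => gG /=; last by rewrite big1.
case: (boolP [exists i, P i G]) => [/existsP [i Pi] | _]; last first.
  by apply: sumr_ge0 => i _; case: (P i G) => //; apply: wt_ge0.
rewrite (bigD1 i) //= Pi lerDl.
by apply: sumr_ge0 => j _; case: (P j G) => //; apply: wt_ge0.
Qed.

End ProbNum.

Lemma term_bound (n : nat) (x : Rdefinitions.R) (K : nat) : 0 <= x ->
  x <= 1 - 100 / n%:R -> (0 < n)%N -> (n * n <= 25 * K)%N ->
  x ^+ K <= expR (- (4 * n%:R)).
Proof.
move=> x0 x1 n0 nK.
set y := (100 / n%:R : Rdefinitions.R).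
have y0 : 0 <= 1 - y by apply: le_trans x1.
have h1 : x ^+ K <= (1 - y) ^+ K by apply: lerXn2r; rewrite ?nnegrE.
have h2 : (1 - y) ^+ K <= expR (- y) ^+ K.
  by apply: lerXn2r; rewrite ?nnegrE ?expR_ge0 //; apply: expR_ge1Dx.
rewrite -expRM_natr in h2.
apply: (le_trans h1); apply: (le_trans h2); rewrite ler_expR mulNr lerN2.
have npos : 0 < (n%:R : Rdefinitions.R) by rewrite ltr0n.
rewrite /y mulrAC ler_pdivlMr // -!natrM ler_nat.
lia.
Qed.

Lemma card_Idx n : #|{: Idx n}| = (2 ^ n * 2 ^ n * 2)%N.
Proof.
have cs : #|{: {set 'I_n}}| = (2 ^ n)%N.
  by rewrite -cardsT -powersetT card_powerset cardsT card_ord.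
by rewrite /Idx !card_prod cs card_bool.
Qed.

Lemma count_bound (n : nat) : (0 < n)%N ->
  (2 ^ n * 2 ^ n * 2)%:R * expR (- (4 * n%:R)) <= expR (- (1 * (n%:R : Rdefinitions.R))).
Proof.
move=> n0.
have h1 : (2 ^ n * 2 ^ n * 2 <= 2 ^ (3 * n))%N.
  rewrite -!expnD -[X in (_ * X)%N]expn1 -expnD leq_exp2l //; lia.
have h2 : ((2 ^ (3 * n))%:R : Rdefinitions.R) <= expR ((3 * n)%:R).
  rewrite natrX -[X in expR X]mulr1 expRM_natl.
  apply: lerXn2r; rewrite ?nnegrE ?expR_ge0 //.
  by apply: le_trans (expR_ge1Dx 1); rewrite lexx.
have h3 : ((2 ^ n * 2 ^ n * 2)%:R : Rdefinitions.R) <= expR ((3 * n)%:R).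
  by apply: le_trans h2; rewrite ler_nat.
apply: le_trans (ler_wpM2r (expR_ge0 _) h3) _.
rewrite -expRD natrM.
rewrite ler_expR; lra.
Qed.

Theorem mainTheorem13 :
  exists c : Rdefinitions.R, 0 < c /\
  exists n0 : nat, forall n : nat, (n0 <= n)%N ->
  forall p : Rdefinitions.R,
    100 / n%:R <= p -> p <= 1 - 100 / n%:R ->
    1 - expR (- (c * n%:R)) <=
      gnp_prob p (fun G : {set {set 'I_n}} => [exists k : 'I_n.+1,
                              (n <= 100 * k)%N && has_disjoint_P3s G k]).
Proof.
exists 1; split; first by [].
exists 200%N => n n200 p hp1 hp2.
have n0 : (0 < n)%N by lia.
have npos : 0 < (n%:R : Rdefinitions.R) by rewrite ltr0n.
have y0 : 0 <= (100 / n%:R : Rdefinitions.R) by rewrite divr_ge0 // ler0n.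
have p0 : 0 <= p by apply: le_trans hp1.
have p1 : p <= 1 by apply: (le_trans hp2); lra.
have q0 : 0 <= 1 - p by lra.
have q1 : 1 - p <= 1 - 100 / n%:R by lra.
set good := (fun G : {set {set 'I_n}} => [exists k : 'I_n.+1, (n <= 100 * k)%N && has_disjoint_P3s G k]).
have hs := gnp_split p good.
have hb : gnp_prob p (fun G => ~~ good G) <= expR (- (1 * n%:R)).
  apply: le_trans (@gnp_mono _ _ _ p0 p1 _ (fun G => [exists i, condI i && evI i G]) _) _.
    by move=> G; apply: bad_of; lia.
  apply: le_trans (gnp_union p0 p1 _) _.
  apply: le_trans (_ : \sum_(i : Idx n) expR (- (4 * n%:R)) <= _); last first.
    by rewrite sumr_const card_Idx -(mulr_natl (expR _) (2 ^ n * 2 ^ n * 2)); apply: count_bound.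
  apply: ler_sum => [[[A B] t]] _.
  case: (boolP (condI (A, B, t))) => c; last first.
    rewrite /gnp_prob big_pred0 ?expR_ge0 // => G.
    by rewrite /= andbF.
  rewrite (@gnp_ext _ _ _ _ (fun G => [forall e, (e \in Ecross A B) ==> ((e \in G) == t)])); last first.
    by [].
  move: c; rewrite /condI => /and3P[D hA hB].
  rewrite gnp_hom ?Ecross_sub // Ecross_card //.
  apply: term_bound => //; first by case: t.
    by case: t.
  nia.
have -> : gnp_prob p good = 1 - gnp_prob p (fun G => ~~ good G) by rewrite -hs addrK.
lra.
Qed.
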